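(* For any finite simple graphs $G$ and $H$ without isolated vertices and each of order at least three, $$\gamma_{tR}(G\times H)\ge \max\left\{\frac{\rho_o(H)\gamma_{tR}(G)}{2},\frac{\rho_o(G)\gamma_{tR}(H)}{2}\right\}.$$
   Context: An open packing of $G$ is a set $D$ of vertices with $N(u)\cap N(v)=\emptyset$ for all distinct $u,v\in D$ (open neighborhoods); $\rho_o(G)$ is the maximum size of an open packing. A total Roman dominating function on $G$ is a map $f:V(G)\to\{0,1,2\}$ such that every vertex with label 0 has a neighbor with label 2 and the subgraph induced by vertices with positive labels has no isolated vertices; $\gamma_{tR}(G)$ is the minimum of $\sum_v f(v)$ over such $f$. The direct product $G\times H$ has vertex set $V(G)\times V(H)$, with $(g,h)(g',h')$ an edge iff $gg'\in E(G)$ and $hh'\in E(H)$. *)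

(* Defs.v *)
From HB Require Import structures.
From mathcomp Require Import all_boot all_order all_algebra.
Set Implicit Arguments. Unset Strict Implicit. Unset Printing Implicit Defensive.

Record sgraph := SGraph {
  svert :> finType;
  sadj : rel svert;
  sadj_sym : symmetric sadj;
  sadj_irr : irreflexive sadj }.

Definition N (G : sgraph) (v : G) : {set G} := [set u | sadj v u].

Definition no_isolated (G : sgraph) : Prop := forall v : G, exists u, sadj v u.

Definition dprod_adj (G H : sgraph) : rel (svert G * svert H)%type :=
  fun x y => @sadj G x.1 y.1 && @sadj H x.2 y.2.

Lemma dprod_adj_sym G H : symmetric (@dprod_adj G H).
Proof. by move=> x y; rewrite /dprod_adj (@sadj_sym G) (@sadj_sym H). Qed.

Lemma dprod_adj_irr G H : irreflexive (@dprod_adj G H).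
Proof. by move=> x; rewrite /dprod_adj (@sadj_irr G). Qed.

Definition gdprod (G H : sgraph) : sgraph :=
  @SGraph (svert G * svert H)%type (@dprod_adj G H) (@dprod_adj_sym G H) (@dprod_adj_irr G H).

Definition open_packing (G : sgraph) (D : {set G}) : bool :=
  [forall u in D, forall v in D, (u != v) ==> [disjoint N u & N v]].

Definition rho_o (G : sgraph) : nat :=
  \max_(D : {set G} | open_packing D) #|D|.

Definition is_TRDF (G : sgraph) (f : {ffun G -> 'I_3}) : bool :=
  [forall v, (nat_of_ord (f v) == 0%N) ==> [exists u, sadj v u && (nat_of_ord (f u) == 2%N)]]
  && [forall v, (0 < f v)%N ==> [exists u, sadj v u && (0 < f u)%N]].

Definition weight (G : sgraph) (f : {ffun G -> 'I_3}) : nat := \sum_(v : G) nat_of_ord (f v).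

(* gamma_tR = minimum weight of a TRDF.  The initial value 2|V| is the weight of
   the constant-2 function, which is a TRDF whenever G has no isolated vertex. *)
Definition gamma_tR (G : sgraph) : nat :=
  \big[minn/(2 * #|G|)%N]_(f : {ffun G -> 'I_3} | is_TRDF f) weight f.

(* Main.v *)
Require Import Defs.
From HB Require Import structures.
From mathcomp Require Import all_boot all_order all_algebra.
Import Order.TTheory GRing.Theory Num.Theory.
Local Open Scope ring_scope.

Local Open Scope nat_scope.

Lemma bigmin_le (T : finType) (P : pred T) (F : T -> nat) i x :
  P x -> \big[minn/i]_(y | P y) F y <= F x.
Proof.
move=> Px; rewrite unlock /reducebig.
have : x \in index_enum T by rewrite mem_index_enum.
elim: (index_enum T) => //= a s IH; rewrite inE => /orP [/eqP <-|xs].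
  by rewrite Px geq_minl.
case: (P a); last exact: IH.
by apply: leq_trans (geq_minr _ _) (IH xs).
Qed.

Lemma gamma_le (G : sgraph) (f : {ffun G -> 'I_3}) :
  is_TRDF f -> gamma_tR G <= weight f.
Proof. by move=> Hf; rewrite /gamma_tR; apply: bigmin_le. Qed.

Lemma gamma_le2 (G : sgraph) : gamma_tR G <= 2 * #|G|.
Proof.
rewrite /gamma_tR; elim/big_ind: _ => //.
  by move=> x y Hx Hy; rewrite geq_min Hx.
move=> g _; rewrite /weight.
have -> : 2 * #|G| = \sum_(v : G) 2 by rewrite sum_nat_const mulnC.
by apply: leq_sum => v _; rewrite -ltnS ltn_ord.
Qed.

Section Main.
Variables (G H : sgraph) (f : {ffun gdprod G H -> 'I_3}).

Definition two : 'I_3 := @Ordinal 3 2 erefl.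

Definition fh (h : H) : {ffun G -> 'I_3} :=
  [ffun g : G => if [exists h' : H, sadj h h' && (0 < f ((g, h') : gdprod G H))]
                 then two else ord0].

Lemma fh_TRDF h : is_TRDF f -> is_TRDF (fh h).
Proof.
move=> /andP [/forallP H1 /forallP H2].
have key : forall g : G, exists g', sadj g g' && (nat_of_ord (fh h g') == 2).
  move=> g.
  have [u /andP [Hu Pu]] : exists u : gdprod G H,
      dprod_adj (g, h) u && (0 < f u).
    case E: (nat_of_ord (f ((g, h) : gdprod G H)) == 0).
      move: (H1 ((g, h) : gdprod G H)); rewrite E /= => /existsP [u /andP [a /eqP b]].
      by exists u; rewrite a b.
    move: (H2 ((g, h) : gdprod G H)); rewrite lt0n E /= => /existsP [u /andP [a b]].
    by exists u; rewrite a b.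
  case: u Hu Pu => u1 u2 /andP [/= a b] c.
  exists u1; rewrite a /= ffunE.
  suff -> : [exists h' : H, sadj h h' && (0 < f ((u1, h') : gdprod G H))] by [].
  by apply/existsP; exists u2; rewrite b.
apply/andP; split; apply/forallP => g; apply/implyP => _;
  have [g' /andP [a /eqP b]] := key g; apply/existsP; exists g'; by rewrite a b.
Qed.

Lemma count_le1 (D : {set H}) (h' : H) : open_packing D ->
  \sum_(h in D) (sadj h h' : nat) <= 1.
Proof.
move=> /forallP Hop.
case: (boolP [exists h in D, sadj h h']) => [/existsP [h0 /andP [Dh0 a0]]|].
  rewrite (bigD1 h0) //= a0 big1 // => h /andP [Dh nh].
  move: (Hop h0); rewrite Dh0 /= => /forallP /(_ h); rewrite Dh eq_sym nh /=.
  move=> /disjointFr Hd; have := Hd h'; rewrite !inE a0 => /(_ isT) ->. by [].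
move=> /existsPn Hn; rewrite big1 // => h Dh.
by move: (Hn h); rewrite Dh /= => /negbTE ->.
Qed.

Lemma fh_bound h g : nat_of_ord (fh h g) <=
   2 * \sum_(h' : H) (sadj h h') * f ((g, h') : gdprod G H).
Proof.
rewrite ffunE; case: ifP => // /existsP [h1 /andP [a b]].
rewrite /= (bigD1 h1) //= a mul1n mulnDr.
apply: leq_trans (leq_addr _ _); rewrite -[X in X <= _]muln1 leq_mul2l.
exact: b.
Qed.

Lemma weight_pair : weight f = \sum_(g : G) \sum_(h : H) f ((g, h) : gdprod G H).
Proof. by rewrite /weight pair_big /=; apply: eq_bigr => -[]. Qed.

Lemma main_ineq (D : {set H}) : is_TRDF f -> open_packing D ->
  #|D| * gamma_tR G <= 2 * weight f.
Proof.
move=> Hf Hop.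
apply: (@leq_trans (\sum_(h in D) weight (fh h))).
  rewrite -sum_nat_const; apply: leq_sum => h _; apply: gamma_le; exact: fh_TRDF.
apply: (@leq_trans (\sum_(h in D) \sum_(g : G)
     2 * \sum_(h' : H) (sadj h h') * f ((g, h') : gdprod G H))).
  by apply: leq_sum => h _; apply: leq_sum => g _; apply: fh_bound.
rewrite exchange_big /= weight_pair big_distrr /=; apply: leq_sum => g _.
rewrite -(big_distrr (times:=muln)) /= leq_pmul2l //.
rewrite exchange_big /=; apply: leq_sum => h' _.
rewrite -big_distrl /= -[X in _ <= X]mul1n leq_mul2r.
by rewrite count_le1 // orbT.
Qed.
End Main.

Lemma swap_ok (G H : sgraph) (f : {ffun gdprod G H -> 'I_3}) :
  is_TRDF f -> exists f' : {ffun gdprod H G -> 'I_3},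
    is_TRDF f' /\ weight f' = weight f.
Proof.
move=> /andP [/forallP H1 /forallP H2].
exists [ffun v : gdprod H G => f ((v.2, v.1) : gdprod G H)]; split.
  apply/andP; split; apply/forallP => -[h g]; rewrite ffunE /=.
    apply/implyP => /(implyP (H1 ((g, h) : gdprod G H))) /existsP [[u1 u2] /andP [/andP [a b] c]].
    by apply/existsP; exists (u2, u1); rewrite ffunE /= /dprod_adj /= a b.
  apply/implyP => /(implyP (H2 ((g, h) : gdprod G H))) /existsP [[u1 u2] /andP [/andP [a b] c]].
  by apply/existsP; exists (u2, u1); rewrite ffunE /= /dprod_adj /= a b.
rewrite !weight_pair exchange_big /=.
by apply: eq_bigr => g _; apply: eq_bigr => h _; rewrite ffunE.
Qed.

Lemma rho_le (H : sgraph) : rho_o H <= #|H|.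
Proof. by rewrite /rho_o; elim/big_ind: _ => // [x y|D _]; [rewrite geq_max => -> ->|apply: max_card]. Qed.

Lemma bound (G H : sgraph) : rho_o H * gamma_tR G <= 2 * gamma_tR (gdprod G H).
Proof.
rewrite [gamma_tR (gdprod G H)]/gamma_tR.
elim/big_ind: _.
- rewrite card_prod; apply: leq_trans (leq_mul (rho_le H) (gamma_le2 G)) _.
  by rewrite [#|G| * _]mulnC mulnCA leq_pmull.
- by move=> x y Hx Hy; rewrite /minn; case: ifP.
move=> f Hf; rewrite /rho_o; elim/big_ind: _ => //.
- by move=> x y Hx Hy; rewrite /maxn; case: ifP.
by move=> D HD; apply: main_ineq.
Qed.

Local Open Scope ring_scope.

Theorem theorem2p8 (G H : sgraph) :
  no_isolated G -> no_isolated H -> (3 <= #|G|)%N -> (3 <= #|H|)%N ->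
  Num.max ((rho_o H)%:R * (gamma_tR G)%:R / 2 : rat)
          ((rho_o G)%:R * (gamma_tR H)%:R / 2)
  <= (gamma_tR (gdprod G H))%:R.
Proof.
move=> _ _ _ _.
have E : (gamma_tR (gdprod H G) <= gamma_tR (gdprod G H))%N.
  rewrite [gamma_tR (gdprod G H)]/gamma_tR; elim/big_ind: _.
  - apply: (leq_trans (gamma_le2 (gdprod H G))); rewrite /gdprod /= !card_prod mulnC (mulnC #|G|%N); by rewrite mulnC.
  - by move=> x y Hx Hy; rewrite /minn; case: ifP.
  move=> f Hf; have [f' [Hf' <-]] := swap_ok _ _ f Hf; exact: gamma_le.
rewrite ge_max !ler_pdivrMr // -!natrM !ler_nat; apply/andP; split;
  rewrite (mulnC (gamma_tR (gdprod G H))).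
  exact: bound.
by apply: (leq_trans (bound H G)); rewrite leq_mul2l E orbT.
Qed.
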